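(* Let $(S,V)$ be a complete semiring-semimodule pair, let $S'\subseteq S$ contain $0$ and $1$, let $n\ge1$, let $\Gamma$ be an alphabet, and let $M\in (S'^{n\times n})^{\Gamma^*\times\Gamma^*}$ be a pushdown transition matrix. Then for all $0\le l\le n$, the pair of families $\big(((M^* )_{p,\epsilon})_{p\in\Gamma},((M^{\omega,l})_p)_{p\in\Gamma}\big)$ is a solution of the algebraic system $$y_p=\sum_{\pi\in\Gamma^*}M_{p,\pi}\,y_\pi,\qquad p\in\Gamma,$$ over the quemiring $S^{n\times n}\times V^n$; that is, setting $x_p=(M^* )_{p,\epsilon}$ and $z_p=(M^{\omega,l})_p$, for all $p\in\Gamma$: $$x_p=\sum_{\pi\in\Gamma^*}M_{p,\pi}x_\pi\quad\text{and}\quad z_p=\sum_{\pi=p_1\dots p_k\in\Gamma^+}M_{p,\pi}\sum_{1\le j\le k}x_{p_1}\cdots x_{p_{j-1}}z_{p_j},$$ where $x_{p_1\dots p_k}=x_{p_1}\cdots x_{p_k}$ and $x_\epsilon$ is the $n\times n$ identity matrix.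
   Context: A complete semiring-semimodule pair $(S,V)$ (in the sense of Ésik and Kuich, ''Modern Automata Theory'') consists of a complete starsemiring $S$ (arbitrary sums with infinite associativity/commutativity/distributivity laws, star $s^*=\sum_{j\ge0}s^j$) and a complete $S$-semimodule $V$, with infinite products $\prod_{j\ge1}s_j\in V$ of sequences in $S$ satisfying the axioms of that framework; then $(S^{n\times n},V^n)$ is again such a pair. The quemiring $S^{n\times n}\times V^n$ has componentwise sum and product $(s,u)(s',u')=(ss',u+su')$; in the system, $y_p=(x_p,z_p)$ and $y_{p_1\dots p_k}=y_{p_1}\cdots y_{p_k}$ (quemiring product), $y_\epsilon=(E,0)$, and a matrix $A\in S^{n\times n}$ acts by $A(s,u)=(As,Au)$; the two displayed equations are exactly the componentwise form of the system. $M\in (S'^{n\times n})^{\Gamma^*\times\Gamma^*}$ is a $\Gamma^*\times\Gamma^*$ matrix with $n\times n$ blocks over $S'$; it is a pushdown transition matrix if (i) for each $p\in\Gamma$ only finitely many blocks $M_{p,\pi}$ are nonzero, and (ii) $M_{\pi_1,\pi_2}=M_{p,\pi}$ if $\pi_1=p\pi'$, $\pi_2=\pi\pi'$ for some $p\in\Gamma$, $\pi,\pi'\in\Gamma^*$, and $0$ otherwise. $M^*=\sum_{m\ge0}M^m$ with blocks $(M^* )_{\pi,\pi'}$. Let $P_l=\{(j_1,j_2,\dots)\in\{1,\dots,n\}^\omega\mid j_t\le l\text{ for infinitely many }t\}$; $M^{\omega,l}\in (V^n)^{\Gamma^*}$ is given by $((M^{\omega,l})_\pi)_i=\sum_{\pi_1,\pi_2,\ldots\in\Gamma^*}\sum_{(j_1,j_2,\ldots)\in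 P_l}(M_{\pi,\pi_1})_{i,j_1}(M_{\pi_1,\pi_2})_{j_1,j_2}\cdots$. *)

(* Defs.v *)
From HB Require Import structures.
From mathcomp Require Import all_boot all_order all_algebra.
Set Implicit Arguments. Unset Strict Implicit. Unset Printing Implicit Defensive.
Import GRing.Theory.
Local Open Scope ring_scope.

Definition sum_op (M : Type) := forall I : Type, (I -> M) -> M.

(* Axioms of a complete (commutative) monoid: empty sum, one-element sums,
   two-element sums, and generalized associativity/commutativity for every
   partition of the index set (given by the fibres of a map f : I -> J). *)
Definition complete_monoid (M : nmodType) (sum : sum_op M) : Prop :=
  [/\ forall (I : Type) (a : I -> M), (I -> False) -> sum I a = 0,
      forall (I : Type) (a : I -> M) (i0 : I), (forall i, i = i0) -> sum I a = a i0,
      forall (I : Type) (a : I -> M) (i0 i1 : I),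
        i0 <> i1 -> (forall i, i = i0 \/ i = i1) -> sum I a = a i0 + a i1
    & forall (I J : Type) (f : I -> J) (a : I -> M),
        sum I a = sum J (fun j => sum {i : I | f i = j} (fun i => a (sval i)))].

Definition complete_semiring (S : pzSemiRingType) (csum : sum_op S) : Prop :=
  [/\ complete_monoid csum,
      forall (I : Type) (a : I -> S) (s : S), csum I (fun i => s * a i) = s * csum I a
    & forall (I : Type) (a : I -> S) (s : S), csum I (fun i => a i * s) = csum I a * s].

Definition complete_semimodule (S : pzSemiRingType) (V : lSemiModType S)
  (csum : sum_op S) (vsum : sum_op V) : Prop :=
  [/\ complete_monoid vsum,
      forall (I : Type) (v : I -> V) (s : S), vsum I (fun i => s *: v i) = s *: vsum I v
    & forall (I : Type) (a : I -> S) (v : V), vsum I (fun i => a i *: v) = csum I a *: v].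

(* Complete semiring-semimodule pair: infinite products prod_{j>=1} s_j are
   modelled by iprod s with s : nat -> S (index shifted to start at 0). *)
Definition complete_pair (S : pzSemiRingType) (V : lSemiModType S)
  (csum : sum_op S) (vsum : sum_op V) (iprod : (nat -> S) -> V) : Prop :=
  [/\ complete_semiring csum,
      complete_semimodule csum vsum,
      forall s : nat -> S, iprod s = s 0%N *: iprod (fun j => s j.+1),
      forall (s : nat -> S) (m : nat -> nat),
        m 0%N = 0%N -> (forall j, (m j < m j.+1)%N) ->
        iprod s = iprod (fun j => \prod_(m j <= k < m j.+1) s k)
    &
      forall (I : nat -> Type) (a : forall j, I j -> S),
        iprod (fun j => csum (I j) (a j)) =
        vsum (forall j, I j) (fun c => iprod (fun j => a j (c j)))].

Section PushdownMatrices.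
Variables (S : pzSemiRingType) (V : lSemiModType S).
Variables (csum : sum_op S) (vsum : sum_op V).
Variables (n : nat) (Gamma : finType).

Definition blockmx := seq Gamma -> seq Gamma -> 'M[S]_n.

Definition msum (I : Type) (F : I -> 'M[S]_n) : 'M[S]_n :=
  \matrix_(i, j) @csum I (fun x => F x i j).
Definition vecsum (I : Type) (F : I -> 'cV[V]_n) : 'cV[V]_n :=
  \col_i @vsum I (fun x => F x i 0).

Definition mxact (A : 'M[S]_n) (u : 'cV[V]_n) : 'cV[V]_n :=
  \col_i \sum_(k < n) A i k *: u k 0.

Definition pushdown (M : blockmx) : Prop :=
  (forall p : Gamma, exists s : seq (seq Gamma),
      forall pi, M [:: p] pi <> 0 -> pi \in s) /\
  (forall pi1 pi2,
     (forall (p : Gamma) (pi pi' : seq Gamma),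
        pi1 = p :: pi' -> pi2 = pi ++ pi' -> M pi1 pi2 = M [:: p] pi) /\
     (~ (exists (p : Gamma) (pi pi' : seq Gamma), pi1 = p :: pi' /\ pi2 = pi ++ pi') ->
        M pi1 pi2 = 0)).

Fixpoint Mpow (M : blockmx) (m : nat) : blockmx :=
  match m with
  | 0%N => fun pi1 pi2 => if pi1 == pi2 then 1%:M else 0
  | m'.+1 => fun pi1 pi2 => msum (fun pi => Mpow M m' pi1 pi *m M pi pi2)
  end.

Definition Mstar (M : blockmx) : blockmx := fun pi1 pi2 => msum (fun m => Mpow M m pi1 pi2).

(* P_l (0-based indices: j_t < l corresponds to j_t <= l) *)
Definition Pl (l : nat) (c : nat -> seq Gamma * 'I_n) : Prop :=
  forall N : nat, exists t : nat, (N <= t)%N /\ ((c t).2 < l)%N.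

(* M^{omega,l}: c t = (pi_{t+1}, j_{t+1}) *)
Definition Momega (iprod : (nat -> S) -> V) (l : nat) (M : blockmx) (pi : seq Gamma)
  : 'cV[V]_n :=
  \col_i @vsum {c : nat -> seq Gamma * 'I_n | Pl l c}
    (fun c =>
       let st k := if k is k'.+1 then (sval c k').1 else pi in
       let ix k := if k is k'.+1 then (sval c k').2 else i in
       iprod (fun t => M (st t) (st t.+1) (ix t) (ix t.+1))).

Definition xprod (x : Gamma -> 'M[S]_n) (w : seq Gamma) : 'M[S]_n :=
  foldr (fun p A => x p *m A) 1%:M w.

End PushdownMatrices.

(* Main.v *)
Require Import Defs.
From HB Require Import structures.
From mathcomp Require Import all_boot all_order all_algebra.
From Stdlib Require Import ClassicalEpsilon FunctionalExtensionality.
Import GRing.Theory.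
Local Open Scope ring_scope.


Lemma sig_eq (A : Type) (P : A -> Prop) (x y : {a | P a}) : sval x = sval y -> x = y.
Proof.
case: x => x px; case: y => y py /= exy; subst y.
by rewrite (Classical_Prop.proof_irrelevance _ px py).
Qed.

Definition dec (P : Prop) : bool := if excluded_middle_informative P then true else false.
Lemma decP (P : Prop) : reflect P (dec P).
Proof. by rewrite /dec; case: excluded_middle_informative => h; constructor. Qed.

Definition goodsum {M : nmodType} (sum : sum_op M) :=
  complete_monoid sum /\ forall I, sum I (fun _ => 0) = 0.

Section CM.
Context {M : nmodType} {sum : sum_op M}.
Hypothesis G : goodsum sum.
Let H := proj1 G.
Let sum0 := proj2 G.

Lemma sum_ext {I : Type} (a b : I -> M) : a =1 b -> sum I a = sum I b.
Proof. by move=> e; rewrite (functional_extensionality _ _ e). Qed.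

Lemma sum_empty {I : Type} (a : I -> M) : (I -> False) -> sum I a = 0.
Proof using G. by case: H => h0 _ _ _; apply: h0. Qed.

Lemma sum_single {I : Type} (a : I -> M) i0 : (forall i, i = i0) -> sum I a = a i0.
Proof using G. by case: H => _ h1 _ _; apply: h1. Qed.

Lemma sum_part {I J : Type} (f : I -> J) (a : I -> M) :
  sum I a = sum J (fun j => sum {i : I | f i = j} (fun i => a (sval i))).
Proof using G. by case: H => _ _ _ h3; apply: h3. Qed.

Lemma sum_bij {I J : Type} (g : J -> I) (h : I -> J) (a : I -> M) :
  cancel g h -> cancel h g -> sum I a = sum J (fun j => a (g j)).
Proof using G.
move=> gh hg; rewrite (sum_part h); apply: sum_ext => j.
rewrite (@sum_single _ _ (exist _ (g j) (gh j))) //.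
case=> i e; apply: sig_eq => /=; by rewrite -e hg.
Qed.

Lemma sum_bool (a : bool -> M) : sum bool a = a true + a false.
Proof using G.
case: H => _ _ h2 _; apply: h2 => //; by case; [left|right].
Qed.

Lemma sum_split {I : Type} (f : I -> bool) (a : I -> M) :
  sum I a = sum {i | f i = true} (fun i => a (sval i)) +
            sum {i | f i = false} (fun i => a (sval i)).
Proof using G. by rewrite (sum_part f) sum_bool. Qed.

Lemma sum_restrict {I : Type} (P : I -> bool) (a : I -> M) :
  (forall i, ~~ P i -> a i = 0) -> sum I a = sum {i | P i} (fun i => a (sval i)).
Proof using G.
move=> z; rewrite (sum_split P).
rewrite [X in _ + X](_ : _ = 0) ?addr0 //.
rewrite -(sum0 {i | P i = false}); apply: sum_ext => -[i /= e]; apply: z; by rewrite e.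
Qed.

Lemma sum_if {I : Type} (P : I -> bool) (a : I -> M) :
  sum I (fun i => if P i then a i else 0) = sum {i | P i} (fun i => a (sval i)).
Proof using G.
rewrite (sum_restrict P); last by move=> i /negbTE ->.
apply: sum_ext => -[i /= ->] //.
Qed.

Lemma sum_inj {I J : Type} (phi : J -> I) (a : I -> M) :
  injective phi -> (forall i, (forall j, phi j <> i) -> a i = 0) ->
  sum I a = sum J (fun j => a (phi j)).
Proof using G.
move=> inj z.
rewrite (sum_restrict (fun i => dec (exists j, phi j = i))); last first.
  by move=> i /decP hi; apply: z => j e; apply: hi; exists j.
pose g (j : J) : {i | dec (exists j, phi j = i)} := exist _ (phi j) (introT (decP _) (ex_intro _ j erefl)).
pose h (x : {i | dec (exists j, phi j = i)}) : J :=
  proj1_sig (constructive_indefinite_description _ (elimT (decP _) (proj2_sig x))).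
rewrite (@sum_bij _ _ g h).
- by [].
- move=> j; apply: inj; rewrite /h /=.
  by case: constructive_indefinite_description.
- move=> x; apply: sig_eq; rewrite /h /=.
  by case: constructive_indefinite_description.
Qed.

Lemma sum_one {I : Type} (i0 : I) (a : I -> M) :
  (forall i, i <> i0 -> a i = 0) -> sum I a = a i0.
Proof using G.
move=> z; rewrite (@sum_inj I unit (fun _ => i0)).
  by rewrite (@sum_single _ _ tt) // => -[].
  by move=> [] [].
by move=> i hi; apply: z => e; apply: (hi tt); rewrite e.
Qed.

Lemma sum_add {I : Type} (a b : I -> M) : sum I (fun i => a i + b i) = sum I a + sum I b.
Proof using G.
pose c (x : I * bool) := if x.2 then a x.1 else b x.1.
have e1 : sum (I * bool)%type c = sum I (fun i => a i + b i).
  rewrite (sum_part fst); apply: sum_ext => i.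
  rewrite (sum_split (fun x => (sval x).2)).
  rewrite (@sum_single _ _ (exist (fun y : {x : (I * bool)%type | x.1 = i} => (sval y).2 = true) (exist (fun x : (I*bool)%type => x.1 = i) (i, true) erefl) erefl)); last first.
    case=> -[[j b'] /= e1] /= e2; apply: sig_eq; apply: sig_eq => /=; by rewrite e1 e2.
  rewrite (@sum_single _ _ (exist (fun y : {x : (I * bool)%type | x.1 = i} => (sval y).2 = false) (exist (fun x : (I*bool)%type => x.1 = i) (i, false) erefl) erefl)); last first.
    case=> -[[j b'] /= e1] /= e2; apply: sig_eq; apply: sig_eq => /=; by rewrite e1 e2.
  by [].
rewrite -e1 (sum_split snd).
congr (_ + _).
- rewrite (@sum_bij _ _ (fun i => exist _ (i, true) erefl) (fun x => (sval x).1)) //.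
  by case=> -[j b'] /= e; apply: sig_eq => /=; rewrite e.
- rewrite (@sum_bij _ _ (fun i => exist _ (i, false) erefl) (fun x => (sval x).1)) //.
  by case=> -[j b'] /= e; apply: sig_eq => /=; rewrite e.
Qed.

Lemma sum_big {I : Type} m (F : I -> 'I_m -> M) :
  sum I (fun i => \sum_(k < m) F i k) = \sum_(k < m) sum I (fun i => F i k).
Proof using G.
elim: m F => [|m IH] F.
  rewrite big_ord0 -(sum0 I); apply: sum_ext => i; by rewrite big_ord0.
rewrite big_ord_recr /= -IH -sum_add; apply: sum_ext => i; by rewrite big_ord_recr.
Qed.

Lemma sum_ord m (a : 'I_m -> M) : sum 'I_m a = \sum_(k < m) a k.
Proof using G.
elim: m a => [|m IH] a.
  by rewrite big_ord0 sum_empty // => -[].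
rewrite big_ord_recr /= (sum_split (fun k : 'I_m.+1 => k != ord_max)) addrC.
rewrite (@sum_single _ _ (exist _ ord_max (negbF (eqxx (ord_max : 'I_m.+1))))); last first.
  case=> k /= e; apply: sig_eq => /=; by apply/eqP; move/negbFE: e.
rewrite addrC; congr (_ + _).
rewrite -IH.
have hw : forall k : 'I_m, (widen_ord (leqnSn m) k != ord_max) = true.
  by move=> k; rewrite -val_eqE /= neq_ltn ltn_ord.
rewrite (@sum_inj _ _ (fun k => exist _ (widen_ord (leqnSn m) k) (hw k))) //.
  by move=> k1 k2 /(congr1 (fun x => val (sval x))) /= e; apply: val_inj.
case=> k hk hn; exfalso.
have km : (k < m)%N.
  by move: (ltn_ord k) (hk); rewrite ltnS leq_eqVlt -val_eqE /= => /orP [->|].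
apply: (hn (Ordinal km)); apply: sig_eq => /=; by apply: val_inj.
Qed.

Lemma sum_pair {I J : Type} (a : (I * J)%type -> M) :
  sum (I * J)%type a = sum I (fun i => sum J (fun j => a (i, j))).
Proof using G.
rewrite (sum_part fst); apply: sum_ext => i.
rewrite (@sum_bij _ _ (fun j => exist (fun x : (I * J)%type => x.1 = i) (i, j) erefl)
   (fun x => (sval x).2)) //.
by case=> -[i' j] /= e; apply: sig_eq => /=; rewrite e.
Qed.

Lemma sum_swap {I J : Type} (a : I -> J -> M) :
  sum I (fun i => sum J (fun j => a i j)) = sum J (fun j => sum I (fun i => a i j)).
Proof using G.
rewrite -(sum_pair (fun x => a x.1 x.2)) -(sum_pair (fun x => a x.2 x.1)).
by rewrite (@sum_bij _ _ (fun x : (J * I)%type => (x.2, x.1)) (fun x => (x.2, x.1))) // => -[].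
Qed.

Lemma sum_nat_conv (g : nat -> nat -> M) :
  sum nat (fun m => \sum_(k < m.+1) g k (m - k)%N) = sum nat (fun a => sum nat (fun b => g a b)).
Proof using G.
rewrite -(sum_pair (fun x => g x.1 x.2)) (sum_part (fun x : (nat * nat)%type => (x.1 + x.2)%N)).
apply: sum_ext => m.
have hk : forall k : 'I_m.+1, (((nat_of_ord k, (m - k)%N) : (nat*nat)%type).1 + ((nat_of_ord k, (m - k)%N) : (nat*nat)%type).2)%N = m.
  by move=> k /=; rewrite subnKC // -ltnS.
rewrite -sum_ord (@sum_bij _ _ (fun k => exist (fun x : (nat*nat)%type => (x.1 + x.2)%N = m) _ (hk k)) (fun x => inord (sval x).1)).
- by [].
- by move=> k; rewrite inord_val.
- case=> -[a b] /= e; apply: sig_eq => /=.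
  have am : (a <= m)%N by rewrite -e leq_addr.
  rewrite inordK ?ltnS // -e addKn //.
Qed.

Lemma sum_eqpart {I : Type} {J : eqType} (f : I -> J) (a : I -> M) :
  sum I a = sum J (fun j => sum I (fun i => if f i == j then a i else 0)).
Proof using G.
rewrite (sum_part f); apply: sum_ext => j; rewrite sum_if.
rewrite (@sum_bij _ _ (fun x : {i | f i == j} => exist (fun i => f i = j) (sval x) (eqP (proj2_sig x)))
  (fun x => exist (fun i => f i == j) (sval x) (introT eqP (proj2_sig x)))) //.
- by move=> x; apply: sig_eq.
- by move=> x; apply: sig_eq.
Qed.

Lemma sum_option {T : Type} (g : option T -> M) :
  sum (option T) g = g None + sum T (fun t => g (Some t)).
Proof using G.
rewrite (sum_split (fun o => isSome o)) addrC.
rewrite (@sum_single _ _ (exist (fun o => isSome o = false) None erefl)); last first.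
  by case=> -[t|] //= e; apply: sig_eq.
congr (_ + _).
rewrite (@sum_inj _ _ (fun t => exist (fun o => isSome o = true) (Some t) erefl)) //.
  by move=> t1 t2 /(congr1 sval) [].
case=> -[t|] //= e hn; exfalso; apply: (hn t); by apply: sig_eq.
Qed.

Lemma sum_nat0 (a : nat -> M) : sum nat a = a 0%N + sum nat (fun m => a m.+1).
Proof using G.
rewrite (@sum_bij _ _ (fun o => if o is Some m then m.+1 else 0%N)
   (fun m => if m is k.+1 then Some k else None)) //.
- by rewrite sum_option.
- by case.
- by case.
Qed.
End CM.
Section Main.
Variables (S : pzSemiRingType) (V : lSemiModType S).
Variables (csum : sum_op S) (vsum : sum_op V) (iprod : (nat -> S) -> V).
Hypothesis Hpair : complete_pair csum vsum iprod.
Variables (n : nat) (Gamma : finType) (M : blockmx S n Gamma).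
Hypothesis HM : pushdown M.

Lemma HS : complete_monoid csum. Proof. by case: Hpair => -[]. Qed.
Lemma csum_mull I (a : I -> S) s : csum I (fun i => s * a i) = s * csum I a.
Proof. by case: Hpair => -[]. Qed.
Lemma csum_mulr I (a : I -> S) s : csum I (fun i => a i * s) = csum I a * s.
Proof. by case: Hpair => -[]. Qed.
Lemma GS : goodsum csum.
Proof.
rewrite /goodsum; split; first exact: HS.
move=> I; rewrite -[RHS](mul0r (csum I (fun _ => 0))) -csum_mull.
by apply: sum_ext => i; rewrite mul0r.
Qed.

Lemma HV : complete_monoid vsum. Proof. by case: Hpair => _ []. Qed.
Lemma vsum_scale I (v : I -> V) s : vsum I (fun i => s *: v i) = s *: vsum I v.
Proof. by case: Hpair => _ []. Qed.
Lemma vsum_scaler I (a : I -> S) v : vsum I (fun i => a i *: v) = csum I a *: v.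
Proof. by case: Hpair => _ []. Qed.
Lemma GV : goodsum vsum.
Proof.
rewrite /goodsum; split; first exact: HV.
move=> I; rewrite -[RHS](scale0r (vsum I (fun _ => 0))) -vsum_scale.
by apply: sum_ext => i; rewrite scale0r.
Qed.

Definition msumop : sum_op 'M[S]_n := fun I F => msum csum F.
Definition vsumop : sum_op 'cV[V]_n := fun I F => vecsum vsum F.

Lemma GM : goodsum msumop.
Proof.
have [h0 h1 h2 h3] := HS.
rewrite /goodsum; split; first split.
- by move=> I a hI; apply/matrixP => i j; rewrite !mxE; apply: h0.
- by move=> I a i0 hi; apply/matrixP => i j; rewrite !mxE (h1 _ _ i0).
- by move=> I a i0 i1 hne hi; apply/matrixP => i j; rewrite !mxE (h2 _ _ i0 i1).
- move=> I J f a; apply/matrixP => i j; rewrite !mxE (h3 _ _ f).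
  by apply: sum_ext => j'; rewrite mxE.
- by move=> I; apply/matrixP => i j; rewrite !mxE (proj2 GS I).
Qed.
Lemma dummy : True. Proof. by [].
Qed.

Lemma GVV : goodsum vsumop.
Proof.
have [h0 h1 h2 h3] := HV.
rewrite /goodsum; split; first split.
- by move=> I a hI; apply/matrixP => i j; rewrite !mxE; apply: h0.
- by move=> I a i0 hi; apply/matrixP => i j; rewrite !mxE (h1 _ _ i0) ?ord1.
- by move=> I a i0 i1 hne hi; apply/matrixP => i j; rewrite !mxE (h2 _ _ i0 i1) ?ord1.
- move=> I J f a; apply/matrixP => i j; rewrite !mxE (h3 _ _ f).
  by apply: sum_ext => j'; rewrite !mxE ?ord1.
- by move=> I; apply/matrixP => i j; rewrite !mxE (proj2 GV I).
Qed.


Lemma msum0 I : msumop I (fun _ => 0) = 0. Proof. exact: (proj2 GM I). Qed.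
Lemma vsum0 I : vsumop I (fun _ => 0) = 0. Proof. exact: (proj2 GVV I). Qed.
Lemma vsum0' I : vsum I (fun _ => 0) = 0. Proof. exact: (proj2 GV I). Qed.

Lemma msumE I (F : I -> 'M[S]_n) : msum csum F = msumop I F. Proof. by []. Qed.
Lemma vsumE I (F : I -> 'cV[V]_n) : vecsum vsum F = vsumop I F. Proof. by []. Qed.

Lemma msum_mull I (A : 'M[S]_n) (F : I -> 'M[S]_n) :
  msumop I (fun x => A *m F x) = A *m msumop I F.
Proof.
apply/matrixP=> i j; rewrite !mxE.
transitivity (csum I (fun x => \sum_k A i k * F x k j)); first by apply: sum_ext => x; rewrite mxE.
rewrite (sum_big GS); apply: eq_bigr => k _; by rewrite mxE csum_mull.
Qed.

Lemma msum_mulr I (A : 'M[S]_n) (F : I -> 'M[S]_n) :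
  msumop I (fun x => F x *m A) = msumop I F *m A.
Proof.
apply/matrixP=> i j; rewrite !mxE.
transitivity (csum I (fun x => \sum_k F x i k * A k j)); first by apply: sum_ext => x; rewrite mxE.
rewrite (sum_big GS); apply: eq_bigr => k _; by rewrite mxE csum_mulr.
Qed.

Lemma mxact_vsum I (A : 'M[S]_n) (F : I -> 'cV[V]_n) :
  mxact A (vsumop I F) = vsumop I (fun x => mxact A (F x)).
Proof.
apply/matrixP=> i j; rewrite !mxE.
transitivity (vsum I (fun x => \sum_k A i k *: F x k 0)); last by apply: sum_ext => x; rewrite mxE.
rewrite (sum_big GV); apply: eq_bigr => k _; by rewrite mxE vsum_scale.
Qed.

Lemma mxact_msum I (F : I -> 'M[S]_n) (u : 'cV[V]_n) :
  mxact (msumop I F) u = vsumop I (fun x => mxact (F x) u).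
Proof.
apply/matrixP=> i j; rewrite !mxE.
transitivity (vsum I (fun x => \sum_k F x i k *: u k 0)); last by apply: sum_ext => x; rewrite mxE.
rewrite (sum_big GV); apply: eq_bigr => k _; by rewrite mxE vsum_scaler.
Qed.

Lemma mxact_mul (A B : 'M[S]_n) (u : 'cV[V]_n) : mxact (A *m B) u = mxact A (mxact B u).
Proof.
apply/matrixP=> i j; rewrite !mxE.
transitivity (\sum_k \sum_m (A i m * B m k) *: u k 0).
  by apply: eq_bigr => k _; rewrite mxE scaler_suml.
rewrite exchange_big; apply: eq_bigr => m _; rewrite mxE scaler_sumr.
by apply: eq_bigr => k _; rewrite scalerA.
Qed.

Lemma mxactD (A : 'M[S]_n) (u v : 'cV[V]_n) : mxact A (u + v) = mxact A u + mxact A v.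
Proof.
apply/matrixP=> i j; rewrite !mxE -big_split; apply: eq_bigr => k _; by rewrite mxE scalerDr.
Qed.

Lemma mxact0r (A : 'M[S]_n) : mxact A (0 : 'cV[V]_n) = 0.
Proof. apply/matrixP=> i j; rewrite !mxE big1 // => k _; by rewrite mxE scaler0. Qed.

Lemma mxact0l (u : 'cV[V]_n) : mxact 0 u = 0.
Proof. apply/matrixP=> i j; rewrite !mxE big1 // => k _; by rewrite mxE scale0r. Qed.

Lemma mxact_sum m (A : 'M[S]_n) (F : 'I_m -> 'cV[V]_n) :
  mxact A (\sum_(k < m) F k) = \sum_(k < m) mxact A (F k).
Proof.
elim: m F => [|m IH] F; first by rewrite !big_ord0 mxact0r.
by rewrite !big_ord_recr /= mxactD IH.
Qed.

Lemma mxact1 (u : 'cV[V]_n) : mxact 1%:M u = u.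
Proof.
apply/matrixP=> i j; rewrite !mxE (bigD1 i) //= mxE eqxx scale1r big1 ?addr0 ?ord1 //.
by move=> k /negbTE nk; rewrite mxE eq_sym nk scale0r.
Qed.

Lemma cat_injr (T : Type) (s s1 s2 : seq T) : s1 ++ s = s2 ++ s -> s1 = s2.
Proof.
move=> e; have hs : size s1 = size s2.
  by move/(congr1 size): e; rewrite !size_cat => /addIn.
by move/(congr1 (take (size s1))): e; rewrite take_size_cat // hs take_size_cat.
Qed.

Lemma M_nil tau : M [::] tau = 0.
Proof.
case: HM => _ /(_ [::] tau) [_ ->] //.
by case=> p [pi [pi' []]].
Qed.

Lemma M_cons q rho sigma : M (q :: rho) (sigma ++ rho) = M [:: q] sigma.
Proof. by case: HM => _ /(_ (q :: rho) (sigma ++ rho)) [h _]; apply: h. Qed.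

Lemma M_cons0 q rho tau : (forall sigma, tau <> sigma ++ rho) -> M (q :: rho) tau = 0.
Proof.
move=> h; case: HM => _ /(_ (q :: rho) tau) [_ ->] //.
by case=> p [pi [pi' [[_ <-] e]]]; apply: (h pi).
Qed.

Lemma M_app w w' pi' : w <> [::] -> M (w ++ pi') (w' ++ pi') = M w w'.
Proof.
case: w => [//|q w0] _ /=.
have [[sigma ->]|h] := Classical_Prop.classic (exists sigma, w' = sigma ++ w0).
  by rewrite -catA !M_cons.
rewrite !M_cons0 // => sigma e.
  by apply: h; exists sigma.
apply: h; exists sigma; move: e; rewrite catA; exact: cat_injr.
Qed.


Notation Mp := (Mpow csum M).
Notation Ms := (Mstar csum M).

Lemma reindex q rho (F : seq Gamma -> 'M[S]_n) :
  msumop _ (fun tau => M (q :: rho) tau *m F tau) =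
  msumop _ (fun sigma => M [:: q] sigma *m F (sigma ++ rho)).
Proof.
rewrite (sum_inj GM (fun sigma => sigma ++ rho)).
- apply: sum_ext => sigma; by rewrite M_cons.
- move=> s1 s2; exact: cat_injr.
- move=> tau h; rewrite M_cons0 ?mul0mx // => sigma e; exact: (h sigma (esym e)).
Qed.

Lemma Mpow0 a b : Mp 0 a b = if a == b then 1%:M else 0.
Proof. by []. Qed.

Lemma MpowS m a b : Mp m.+1 a b = msumop _ (fun pi => Mp m a pi *m M pi b).
Proof. by []. Qed.

Lemma Mpow_first m : forall a b, Mp m.+1 a b = msumop _ (fun s => M a s *m Mp m s b).
Proof.
elim: m => [|m IH] a b.
- rewrite MpowS (sum_one GM a).
  + rewrite /= eqxx mul1mx (sum_one GM b) /= ?eqxx ?mulmx1 //.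
    by move=> s hs; rewrite (introF eqP hs) mulmx0.
  + by move=> s hs; rewrite /= eq_sym (introF eqP hs) mul0mx.
- transitivity (msumop _ (fun t => msumop _ (fun s => M a s *m (Mp m s t *m M t b)))).
    rewrite MpowS; apply: sum_ext => t; rewrite IH -msum_mulr; apply: sum_ext => s; by rewrite mulmxA.
  rewrite (sum_swap GM); apply: sum_ext => s; by rewrite msum_mull MpowS.
Qed.

Lemma Mpow_nil m b : Mp m.+1 [::] b = 0.
Proof.
rewrite Mpow_first -(msum0 (seq Gamma)); apply: sum_ext => s; by rewrite M_nil mul0mx.
Qed.

Lemma Mpow_conv m : forall rho pi', Mp m (rho ++ pi') [::] =
  \sum_(a < m.+1) Mp a rho [::] *m Mp (m - a) pi' [::].
Proof.
elim: m => [|m IH] rho pi'.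
- rewrite big_ord_recr big_ord0 /= add0r.
  case: rho => [|q rho] /=; first by rewrite mul1mx.
  by rewrite mul0mx.
- case: rho => [|q rho].
  + rewrite big_ord_recl (_ : Mp 0 [::] [::] = 1%:M) ?eqxx // subn0 mul1mx big1 ?addr0 // => a _.
    by rewrite Mpow_nil mul0mx.
  + rewrite cat_cons Mpow_first reindex.
    transitivity (msumop _ (fun s => \sum_(a < m.+1) M [:: q] s *m (Mp a (s ++ rho) [::] *m Mp (m - a) pi' [::]))).
      apply: sum_ext => s; by rewrite catA IH mulmx_sumr.
    rewrite (sum_big GM) [RHS]big_ord_recl (_ : Mp 0 (q :: rho) [::] = 0) // mul0mx add0r; apply: eq_bigr => a _.
    rewrite lift0 subSS Mpow_first (reindex q rho) -msum_mulr.
    by apply: sum_ext => s; rewrite mulmxA.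
Qed.

Lemma Mstar_cat rho pi' : Ms (rho ++ pi') [::] = Ms rho [::] *m Ms pi' [::].
Proof.
rewrite /Mstar !msumE.
transitivity (msumop nat (fun m => \sum_(a < m.+1) Mp a rho [::] *m Mp (m - a) pi' [::])).
  by apply: sum_ext => m; rewrite Mpow_conv.
apply: etrans (sum_nat_conv GM (fun a b => Mp a rho [::] *m Mp b pi' [::])) _.
rewrite -msum_mulr; apply: sum_ext => a; by rewrite -msum_mull.
Qed.

Lemma Mstar_nil : Ms [::] [::] = 1%:M.
Proof.
rewrite /Mstar msumE (sum_nat0 GM) Mpow0 eqxx.
have -> : msumop nat (fun m => Mp m.+1 [::] [::]) = 0.
  rewrite -(msum0 nat); apply: sum_ext => m; by rewrite Mpow_nil.
by rewrite addr0.
Qed.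

Lemma xprod_Mstar sigma : xprod (fun q => Ms [:: q] [::]) sigma = Ms sigma [::].
Proof.
elim: sigma => [|q s IH]; first by rewrite /xprod /= Mstar_nil.
by rewrite /xprod /= -/(xprod _ s) IH -(Mstar_cat [:: q] s).
Qed.

Lemma x_eq p : Ms [:: p] [::] =
  msum csum (fun pi => M [:: p] pi *m xprod (fun q => Ms [:: q] [::]) pi).
Proof.
rewrite {1}/Mstar !msumE (sum_nat0 GM) Mpow0 (_ : ([:: p] == [::]) = false) // add0r.
transitivity (msumop nat (fun m => msumop _ (fun s => M [:: p] s *m Mp m s [::]))).
  by apply: sum_ext => m; rewrite Mpow_first.
rewrite (sum_swap GM); apply: sum_ext => s.
by rewrite msum_mull xprod_Mstar /Mstar msumE.
Qed.


Lemma ip_cons f : iprod f = f 0%N *: iprod (fun j => f j.+1).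
Proof. by case: Hpair => _ _ h _ _; apply: h. Qed.

Lemma ip_zero k : forall f, f k = 0 -> iprod f = 0.
Proof.
elim: k => [|k IH] f fk; rewrite ip_cons.
  by rewrite fk scale0r.
by rewrite (IH (fun j => f j.+1)) // scaler0.
Qed.

Lemma ip_ext f g : f =1 g -> iprod f = iprod g.
Proof. by move=> e; rewrite (functional_extensionality _ _ e). Qed.

Variable l : nat.
Definition path := (nat -> seq Gamma * 'I_n)%type.
Definition PT := {c : path | Pl l c}.
Definition st (s : seq Gamma) (c : path) k := if k is k'.+1 then (c k').1 else s.
Definition ix (i : 'I_n) (c : path) k := if k is k'.+1 then (c k').2 else i.
Definition Wt s i (c : path) :=
  iprod (fun t => M (st s c t) (st s c t.+1) (ix i c t) (ix i c t.+1)).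
Notation Om := (Momega vsum iprod l M).

Lemma OmE s i : Om s i 0 = vsum PT (fun c => Wt s i (sval c)).
Proof. by rewrite mxE. Qed.

Definition pcons (h : seq Gamma * 'I_n) (c : path) : path :=
  fun k => if k is k'.+1 then c k' else h.
Definition pshift (c : path) : path := fun k => c k.+1.

Lemma Pl_cons h c : Pl l (pcons h c) <-> Pl l c.
Proof.
split=> hp N.
- have [t [ht hl]] := hp N.+1.
  case: t ht hl => [//|t] ht hl; by exists t.
- have [t [ht hl]] := hp N.
  exists t.+1; split => //; exact: leqW.
Qed.

Lemma Pl_shift c : Pl l c -> Pl l (pshift c).
Proof.
move=> hp N; have [t [ht hl]] := hp N.+1.
case: t ht hl => [//|t] ht hl; by exists t.
Qed.

Lemma pcons_shift c : pcons (c 0%N) (pshift c) = c.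
Proof. by apply: functional_extensionality => -[]. Qed.

Lemma st_cons s h c t : st s (pcons h c) t.+1 = st h.1 c t.
Proof. by case: t. Qed.

Lemma Wt_cons s i h c : Wt s i (pcons h c) = M s h.1 i h.2 *: Wt h.1 h.2 c.
Proof.
rewrite /Wt ip_cons; congr (_ *: _); apply: ip_ext => -[|t] //.
Qed.

Definition Omf (F : seq Gamma -> path -> bool) s i :=
  vsum PT (fun c => if F s (sval c) then Wt s i (sval c) else 0).

Lemma first_step (F F' : seq Gamma -> path -> bool) (b : seq Gamma -> bool) :
  (forall s h c, F s (pcons h c) = b s && F' h.1 c) ->
  forall s i, Omf F s i =
    if b s then vsum (seq Gamma * 'I_n)%type (fun h => M s h.1 i h.2 *: Omf F' h.1 h.2) else 0.
Proof.
move=> hF s i.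
pose g (x : ((seq Gamma * 'I_n) * PT)%type) : PT :=
  exist _ (pcons x.1 (sval x.2)) (proj2 (Pl_cons _ _) (proj2_sig x.2)).
pose h (c : PT) : ((seq Gamma * 'I_n) * PT)%type :=
  (sval c 0%N, exist _ (pshift (sval c)) (Pl_shift _ (proj2_sig c))).
rewrite /Omf (sum_bij GV g h); first last.
- by move=> c; apply: sig_eq => /=; rewrite pcons_shift.
- by case=> hd [c pc]; congr pair; apply: sig_eq.
rewrite (sum_pair GV).
case hb: (b s).
- apply: sum_ext => hd; rewrite -vsum_scale; apply: sum_ext => c.
  rewrite /g /= hF hb /= Wt_cons; case: (F' _ _) => //; by rewrite scaler0.
- transitivity (vsum (seq Gamma * 'I_n)%type (fun _ => vsum PT (fun _ => 0))).
    by apply: sum_ext => hd; apply: sum_ext => c; rewrite /g /= hF hb.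
  by rewrite vsum0' vsum0'.
Qed.

Lemma Om_first s i :
  Om s i 0 = vsum (seq Gamma * 'I_n)%type (fun h => M s h.1 i h.2 *: Om h.1 h.2 0).
Proof.
have e : forall s i, Om s i 0 = Omf (fun _ _ => true) s i.
  by move=> s' i'; rewrite OmE.
rewrite e (first_step (fun _ _ => true) (fun _ _ => true) (fun _ => true)) //=.
by apply: sum_ext => hd; rewrite e.
Qed.

Lemma Om_nil : Om [::] = 0.
Proof.
apply/matrixP => i j; rewrite ord1 Om_first mxE -(vsum0' (seq Gamma * 'I_n)%type).
by apply: sum_ext => hd; rewrite M_nil mxE scale0r.
Qed.


Definition fh (pp : seq Gamma) a s (c : path) :=
  (st s c a == pp) && all (fun t => st s c t != pp) (iota 0 a).

Lemma fh_cons pp a s h c : fh pp a.+1 s (pcons h c) = (s != pp) && fh pp a h.1 c.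
Proof.
rewrite /fh st_cons /= -[1%N]/(1 + 0)%N iotaDl all_map andbCA.
congr (_ && (_ && _)); apply: eq_all => t /=; by rewrite add0n; case: t.
Qed.

Lemma vsum_pair_ord (F : seq Gamma -> 'I_n -> V) :
  vsum (seq Gamma * 'I_n)%type (fun h => F h.1 h.2) =
  vsum (seq Gamma) (fun tau => \sum_(k < n) F tau k).
Proof. rewrite (sum_pair GV); apply: sum_ext => tau; by rewrite (sum_ord GV). Qed.

Lemma vreindex q rho (F : seq Gamma -> 'I_n -> V) i :
  vsum (seq Gamma) (fun tau => \sum_(k < n) M (q :: rho) tau i k *: F tau k) =
  vsum (seq Gamma) (fun sigma => \sum_(k < n) M [:: q] sigma i k *: F (sigma ++ rho) k).
Proof.
rewrite (sum_inj GV (fun sigma => sigma ++ rho)).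
- apply: sum_ext => sigma; by rewrite M_cons.
- move=> s1 s2; exact: cat_injr.
- move=> tau h; apply: big1 => k _.
  rewrite M_cons0 ?mxE ?scale0r // => sigma e; exact: (h sigma (esym e)).
Qed.

Lemma H_eq pp a : forall rho i,
  Omf (fh pp a) (rho ++ pp) i = (mxact (Mp a rho [::]) (Om pp)) i 0.
Proof.
elim: a => [|a IH] rho i.
- case: rho => [|q rho].
  + rewrite Mpow0 eqxx mxact1 OmE /Omf; apply: sum_ext => c.
    by rewrite /fh /= eqxx.
  + rewrite Mpow0 /= mxact0l mxE /Omf -[RHS](vsum0' PT); apply: sum_ext => c.
    have -> : fh pp 0 ((q :: rho) ++ pp) (sval c) = false.
      rewrite /fh andbT; apply/eqP => e; move: (congr1 size e).
      by rewrite /= size_cat => /eqP; rewrite -addSn -{2}(add0n (size pp)) eqn_add2r.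
    by [].
- rewrite (first_step (fh pp a.+1) (fh pp a) (fun s => s != pp)); last first.
    by move=> s h c; rewrite fh_cons.
  case: rho => [|q rho].
  + by rewrite Mpow_nil mxact0l mxE cat0s eqxx.
  + have -> : ((q :: rho) ++ pp != pp) = true.
      apply/eqP => e; move: (congr1 size e).
      by rewrite /= size_cat => /eqP; rewrite -addSn -{2}(add0n (size pp)) eqn_add2r.
    rewrite (vsum_pair_ord (fun tau k => M ((q :: rho) ++ pp) tau i k *: Omf (fh pp a) tau k)).
    rewrite cat_cons (vreindex q (rho ++ pp) (fun tau k => Omf (fh pp a) tau k)).
    rewrite Mpow_first (reindex q rho) mxact_msum mxE; apply: sum_ext => sigma.
    rewrite mxact_mul [RHS]mxE; apply: eq_bigr => k _.
    by rewrite catA IH.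
Qed.


Definition hit (pp : seq Gamma) s (c : path) : option nat :=
  match excluded_middle_informative (exists a, st s c a == pp) with
  | left e => Some (ex_minn e)
  | right _ => None
  end.

Lemma hit_some pp s c a : (hit pp s c == Some a) = fh pp a s c.
Proof.
rewrite /hit /fh; case: excluded_middle_informative => [e|ne].
- case: ex_minnP => m hm hmin; apply/idP/idP.
  + move/eqP => [<-]; rewrite hm /=; apply/allP => t; rewrite mem_iota add0n => /andP [_ ht].
    apply/negP => /hmin; by rewrite leqNgt ht.
  + move/andP => [ha /allP hall]; apply/eqP; congr Some; apply/eqP; rewrite eqn_leq hmin //=.
    rewrite leqNgt; apply/negP => lt; move: (hall m); rewrite mem_iota add0n lt hm => /(_ isT).
    by [].
- apply/idP/idP => //; move/andP => [ha _]; exfalso; apply: ne; by exists a.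
Qed.

Lemma hit_none pp s c : hit pp s c = None <-> forall t, st s c t != pp.
Proof.
rewrite /hit; case: excluded_middle_informative => [e|ne].
- split=> // h; case: e => t ht; by move: (h t); rewrite ht.
- split=> // _ t; apply/negP => ht; apply: ne; by exists t.
Qed.

Definition hasSuf (pp s : seq Gamma) :=
  (size pp <= size s)%N && (drop (size s - size pp) s == pp).
Definition strip (pp s : seq Gamma) := take (size s - size pp) s.

Lemma hasSuf_cat w pp : hasSuf pp (w ++ pp).
Proof. by rewrite /hasSuf size_cat leq_addl addnK drop_size_cat // eqxx. Qed.

Lemma hasSufE pp s : hasSuf pp s -> s = strip pp s ++ pp.
Proof. by case/andP => _ /eqP e; rewrite -{2}e /strip cat_take_drop. Qed.

Lemma strip_cat w pp : strip pp (w ++ pp) = w.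
Proof. by rewrite /strip size_cat addnK take_size_cat. Qed.

Definition papp (pp : seq Gamma) (c : path) : path := fun k => ((c k).1 ++ pp, (c k).2).
Definition pstrip (pp : seq Gamma) (c : path) : path := fun k => (strip pp (c k).1, (c k).2).

Lemma st_app pp rho c t : st (rho ++ pp) (papp pp c) t = st rho c t ++ pp.
Proof. by case: t. Qed.

Definition allSuf pp s (c : path) := forall t, hasSuf pp (st s c t).

Lemma bad_zero pp s i (c : path) : hasSuf pp s -> (forall t, st s c t != pp) ->
  ~ allSuf pp s c -> Wt s i c = 0.
Proof.
move=> hs hn /Classical_Pred_Type.not_all_ex_not hex.
have ex : exists t, ~~ hasSuf pp (st s c t).
  by case: hex => t ht; exists t; apply/negP.
case: (ex_minnP ex) => m hm hmin.
case: m hm hmin => [|u] hm hmin; first by rewrite /= hs in hm.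
have hu : hasSuf pp (st s c u).
  by apply/negPn/negP => /hmin; rewrite ltnn.
apply: (ip_zero u); rewrite /=.
move: (hasSufE _ _ hu) (hn u) => e hnu.
case E: (strip pp (st s c u)) e => [|q w0] e.
  by rewrite e /= eqxx in hnu.
rewrite e M_cons0 ?mxE // => sigma e2.
by move: hm; rewrite /= e2 catA hasSuf_cat.
Qed.

Lemma never_hit pp rho i :
  vsum PT (fun c => if hit pp (rho ++ pp) (sval c) == None then Wt (rho ++ pp) i (sval c) else 0)
  = Om rho i 0.
Proof.
rewrite (sum_restrict GV (fun c : PT => dec (allSuf pp (rho ++ pp) (sval c)))); last first.
  move=> c /decP hc; case hh: (hit _ _ _ == None) => //.
  apply: bad_zero; [exact: hasSuf_cat | by apply/hit_none/eqP | exact: hc].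
pose g (c : PT) : {c : PT | dec (allSuf pp (rho ++ pp) (sval c))} :=
  exist _ (exist (Pl l) (papp pp (sval c)) (proj2_sig c))
    (introT (decP _) (fun t => eq_ind_r (hasSuf pp) (hasSuf_cat _ _) (st_app pp rho (sval c) t))).
pose h (x : {c : PT | dec (allSuf pp (rho ++ pp) (sval c))}) : PT :=
  exist (Pl l) (pstrip pp (sval (sval x))) (proj2_sig (sval x)).
have c1 : cancel g h.
  case=> c0 pc; apply: sig_eq => /=.
  apply: functional_extensionality => k; rewrite /papp /pstrip /= strip_cat; by case: (c0 k).
have c2 : cancel h g.
  case=> -[c0 pc] hc0; have /decP hc1 := hc0; apply: sig_eq; apply: sig_eq => /=.
  apply: functional_extensionality => k; rewrite /papp /pstrip /=.
  move: (hc1 k.+1) => /= /hasSufE <-; by case: (c0 k).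
apply: etrans (sum_bij GV g h _ c1 c2) _.
rewrite OmE; apply: sum_ext => -[c pc] /=.
have [hne|hz] := Classical_Prop.classic (forall t, st rho c t != [::]).
- have -> : hit pp (rho ++ pp) (papp pp c) = None.
    apply/hit_none => t; rewrite st_app; apply/eqP => e.
    by move: (hne t); rewrite (cat_injr _ pp (st rho c t) [::] e) eqxx.
  rewrite eqxx /Wt; apply: ip_ext => t.
  rewrite !st_app M_app; last by apply/eqP.
  by case: t.
- move/Classical_Pred_Type.not_all_ex_not: hz => [t /negP /negPn /eqP ht].
  have -> : (hit pp (rho ++ pp) (papp pp c) == None) = false.
    apply/negP => /eqP /hit_none /(_ t); by rewrite st_app ht eqxx.
  by rewrite /Wt (ip_zero t) // ht M_nil mxE.
Qed.


Lemma Om_cat pp rho i : Om (rho ++ pp) i 0 = Om rho i 0 + (mxact (Ms rho [::]) (Om pp)) i 0.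
Proof.
rewrite OmE (sum_eqpart GV (fun c : PT => hit pp (rho ++ pp) (sval c))) (sum_option GV).
congr (_ + _); first exact: never_hit.
transitivity (vsum nat (fun a => Omf (fh pp a) (rho ++ pp) i)).
  apply: sum_ext => a; rewrite /Omf; apply: sum_ext => c; by rewrite hit_some.
rewrite /Mstar msumE mxact_msum mxE; apply: sum_ext => a; by rewrite H_eq.
Qed.

Lemma Om_catv pp rho : Om (rho ++ pp) = Om rho + mxact (Ms rho [::]) (Om pp).
Proof. apply/matrixP => i j; by rewrite ord1 [RHS]mxE Om_cat. Qed.

Lemma Om_decomp p tau : Om tau =
  \sum_(j < size tau) mxact (xprod (fun q => Ms [:: q] [::]) (take j tau)) (Om [:: nth p tau j]).
Proof.
elim: tau => [|q tau IH]; first by rewrite Om_nil big_ord0.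
have -> : Om (q :: tau) = Om [:: q] + mxact (Ms [:: q] [::]) (Om tau) by exact: (Om_catv tau [:: q]).
rewrite IH mxact_sum big_ord_recl; congr (_ + _).
  by rewrite take0 /xprod /= mxact1.
apply: eq_bigr => j _; by rewrite -mxact_mul lift0.
Qed.

Lemma z_eq p : Om [:: p] = vecsum vsum (fun pi : {w : seq Gamma | (0 < size w)%N} =>
  mxact (M [:: p] (sval pi)) (\sum_(j < size (sval pi))
     mxact (xprod (fun q => Ms [:: q] [::]) (take j (sval pi))) (Om [:: nth p (sval pi) j]))).
Proof.
transitivity (vsumop (seq Gamma) (fun tau => mxact (M [:: p] tau) (Om tau))).
  apply/matrixP => i j; rewrite ord1 Om_first.
  apply: etrans (vsum_pair_ord (fun tau k => M [:: p] tau i k *: Om tau k 0)) _.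
  rewrite mxE; apply: sum_ext => tau; by rewrite mxE.
rewrite (sum_restrict GVV (fun tau : seq Gamma => (0 < size tau)%N)); last first.
  by case=> // _; rewrite Om_nil mxact0r.
apply: sum_ext => -[tau htau] /=; by rewrite (Om_decomp p tau).
Qed.

End Main.

Theorem corollary9
  (S : pzSemiRingType) (V : lSemiModType S)
  (csum : sum_op S) (vsum : sum_op V) (iprod : (nat -> S) -> V)
  (Hpair : complete_pair csum vsum iprod)
  (S' : S -> Prop) (HS'0 : S' 0) (HS'1 : S' 1)
  (n : nat) (Hn : (0 < n)%N)
  (Gamma : finType) (M : blockmx S n Gamma)
  (HMS' : forall pi1 pi2 i j, S' (M pi1 pi2 i j))
  (HM : pushdown M)
  (l : nat) (Hl : (l <= n)%N) :
  let x := fun q : Gamma => Mstar csum M [:: q] [::] in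
  let z := fun q : Gamma => Momega vsum iprod l M [:: q] in
  forall p : Gamma,
    x p = msum csum (fun pi : seq Gamma => M [:: p] pi *m xprod x pi) /\
    z p = vecsum vsum
            (fun (pi : {w : seq Gamma | (0 < size w)%N}) =>
               mxact (M [:: p] (sval pi))
                 (\sum_(j < size (sval pi))
                     mxact (xprod x (take j (sval pi))) (z (nth p (sval pi) j)))).
Proof.
move=> x z p; split.
- exact: (@x_eq S V csum vsum iprod Hpair n Gamma M HM p).
- exact: (@z_eq S V csum vsum iprod Hpair n Gamma M HM l p).
Qed.
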